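(* The finitely generated objects of the category $\mathsf{Alex}$ of Alexandroff-discrete spaces are precisely the finite topological spaces. The finitely generated objects of the category $\mathsf{Alex}_0$ of Alexandroff-discrete T$_0$-spaces are precisely the finite T$_0$-spaces.
   Context: A topological space is Alexandroff-discrete if arbitrary intersections of open sets are open. $\mathsf{Alex}$ and $\mathsf{Alex}_0$ are the full subcategories of $\mathsf{Top}$ of Alexandroff-discrete spaces and of Alexandroff-discrete T$_0$-spaces, respectively. An object $X$ of a category $\mathcal{C}$ is finitely generated if for every directed diagram $(Z_i)_{i\in I}$ in $\mathcal{C}$ (indexed by a directed poset, i.e. every finite subset has an upper bound) all of whose connecting morphisms $z_{i,j}$ are monomorphisms, with colimit cocone $c_i:Z_i\to Z$ in $\mathcal{C}$, every morphism $f:X\to Z$ factorizes as $f=c_i\cdot g$ for some $i$ and $g:X\to Z_i$, and if also $f=c_i\cdot g'$ then $z_{i,j}\cdot g=z_{i,j}\cdot g'$ for some connecting morphism $z_{i,j}$. *)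

(* Defs.v *)
From HB Require Import structures.
From mathcomp Require Import all_boot all_order.
From mathcomp Require Import all_classical all_reals topology.

Local Open Scope classical_set_scope.

Definition alexandroff (T : topologicalType) : Prop :=
  forall F : set (set T), (forall U, F U -> open U) ->
    open (\bigcap_(U in F) U).

Definition Alex (T : topologicalType) : Prop := alexandroff T.
Definition Alex0 (T : topologicalType) : Prop :=
  alexandroff T /\ kolmogorov_space T.

(* A subcategory C of Top given by a class of objects; morphisms are
   continuous maps, identified with their underlying functions. *)

Definition mono_in (C : topologicalType -> Prop) {X Y : topologicalType}
  (f : X -> Y) : Prop :=
  forall W : topologicalType, C W -> forall g h : W -> X,
    continuous g -> continuous h -> f \o g = f \o h -> g = h.

Definition directed_poset {I : Type} (le : I -> I -> Prop) : Prop :=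
  [/\ (forall i, le i i),
      (forall i j, le i j -> le j i -> i = j),
      (forall i j k, le i j -> le j k -> le i k) &
      (forall A : set I, finite_set A -> exists u, forall i, A i -> le i u)].

Definition diagram_in (C : topologicalType -> Prop) {I : Type}
  (le : I -> I -> Prop) (Z : I -> topologicalType)
  (z : forall i j, le i j -> Z i -> Z j) : Prop :=
  [/\ (forall i, C (Z i)),
      (forall i j (p : le i j), continuous (z i j p)),
      (forall i (p : le i i), z i i p = id) &
      (forall i j k (p : le i j) (q : le j k) (r : le i k),
          z j k q \o z i j p = z i k r)].

Definition colimit_in (C : topologicalType -> Prop) {I : Type}
  (le : I -> I -> Prop) (Z : I -> topologicalType)
  (z : forall i j, le i j -> Z i -> Z j)
  (L : topologicalType) (c : forall i, Z i -> L) : Prop :=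
  [/\ C L,
      (forall i, continuous (c i)),
      (forall i j (p : le i j), c j \o z i j p = c i) &
      (forall W : topologicalType, C W -> forall d : forall i, Z i -> W,
          (forall i, continuous (d i)) ->
          (forall i j (p : le i j), d j \o z i j p = d i) ->
          exists! u : L -> W, continuous u /\ forall i, u \o c i = d i)].

Definition fin_gen (C : topologicalType -> Prop) (X : topologicalType) : Prop :=
  forall (I : Type) (le : I -> I -> Prop) (Z : I -> topologicalType)
         (z : forall i j, le i j -> Z i -> Z j),
    directed_poset le -> diagram_in C le Z z ->
    (forall i j (p : le i j), mono_in C (z i j p)) ->
    forall (L : topologicalType) (c : forall i, Z i -> L),
      colimit_in C le Z z L c ->
      forall f : X -> L, continuous f ->
        (exists i, exists g : X -> Z i, continuous g /\ f = c i \o g) /\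
        (forall i (g g' : X -> Z i), continuous g -> continuous g' ->
            f = c i \o g -> f = c i \o g' ->
            exists j, exists p : le i j, z i j p \o g = z i j p \o g').

(* Main.v *)
Require Import Defs.
From HB Require Import structures.
From mathcomp Require Import all_boot all_order.
From mathcomp Require Import all_classical all_reals topology.
Local Open Scope classical_set_scope.


Definition spec (T : topologicalType) (x y : T) := forall U, open U -> U x -> U y.
Arguments spec {T}.

Lemma spec_refl (T : topologicalType) (x : T) : spec x x.
Proof. by move=> U. Qed.

Lemma spec_trans (T : topologicalType) (x y w : T) : spec x y -> spec y w -> spec x w.
Proof. by move=> h1 h2 U oU Ux; apply: h2 => //; apply: h1. Qed.

Lemma cont_spec {S T : topologicalType} {f : S -> T} {x y} :
  continuous f -> spec x y -> spec (f x) (f y).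
Proof.
move=> /continuousP fc h U oU Ux; exact: (h (f @^-1` U) (fc _ oU)).
Qed.

Lemma alex_open (T : topologicalType) (U : set T) : alexandroff T ->
  (open U <-> forall x y, U x -> spec x y -> U y).
Proof.
move=> hA; split => [oU x y Ux h|h]; first exact: h.
have -> : U = \bigcup_(x in U) \bigcap_(V in [set V | open V /\ V x]) V.
  rewrite predeqE => p; split => [Up|[x Ux Np]].
    by exists p => // V [].
  by apply: (h x) => // V oV Vx; apply: Np.
by apply: bigcup_open => x Ux; apply: hA => V [].
Qed.

Lemma alex_cont (S T : topologicalType) (f : S -> T) : alexandroff S ->
  (forall x y, spec x y -> spec (f x) (f y)) -> continuous f.
Proof.
move=> hA h; apply/continuousP => A oA.
apply/alex_open => // x y Ax sxy; exact: (h x y sxy A oA).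
Qed.

Lemma kolmo_spec (T : topologicalType) (x y : T) : kolmogorov_space T ->
  spec x y -> spec y x -> x = y.
Proof.
move=> hK sxy syx; have [//|nxy] := pselect (x = y); exfalso.
have /hK [A [[Ax nAy]|[Ay nAx]]] : x != y by apply/eqP.
- move: Ax nAy; rewrite inE => /[swap]; rewrite inE => nAy.
  rewrite nbhsE => -[B [oB Bx] BA]; apply: nAy; apply: BA; exact: sxy.
- move: Ay nAx; rewrite inE => /[swap]; rewrite inE => nAx.
  rewrite nbhsE => -[B [oB By] BA]; apply: nAx; apply: BA; exact: syx.
Qed.

Section AlexT.
Variables (T : Type) (R : T -> T -> Prop).
Definition alexT (r : T -> T -> Prop) : Type := T.
Local Notation aT := (alexT R).
HB.instance Definition _ := gen_eqMixin aT.
HB.instance Definition _ := gen_choiceMixin aT.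
Definition upc (A : set aT) := forall x y, R x y -> A x -> A y.
Lemma upcT : upc setT. Proof. by []. Qed.
Lemma upcI : setI_closed upc.
Proof. by move=> A B hA hB x y r [Ax Bx]; split; [exact: hA Ax|exact: hB Bx]. Qed.
Lemma upcU (I : Type) (f : I -> set aT) : (forall i, upc (f i)) -> upc (\bigcup_i f i).
Proof. by move=> h x y r [i _ fx]; exists i => //; exact: h fx. Qed.
HB.instance Definition _ := isOpenTopological.Build aT upcT upcI upcU.

Lemma alexT_open (A : set aT) : open A <-> upc A.
Proof.
rewrite openE; split => [h x y r Ax|h x Ax].
  by have [B [oB Bx BA]] := h x Ax; apply: BA; exact: oB r Bx.
by rewrite /interior /nbhs /=; exists A; split.
Qed.

Lemma alexT_alex : alexandroff aT.
Proof.
move=> F hF; apply: (proj2 (alexT_open _)) => x y r Ix V FV.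
exact: (proj1 (alexT_open _) (hF V FV) x y r (Ix V FV)).
Qed.

Lemma alexT_Rspec (x y : aT) : R x y -> spec x y.
Proof. by move=> r U /alexT_open oU; exact: oU. Qed.

Lemma alexT_specR (x y : aT) : (forall a, R a a) ->
  (forall a b c, R a b -> R b c -> R a c) -> spec x y -> R x y.
Proof.
move=> rr rt h; apply: (h (R x : set aT)) => //; apply: (proj2 (alexT_open _)) => a b rab rxa.
exact: rt rxa rab.
Qed.

Lemma alexT_kolmo : (forall a, R a a) ->
  (forall a b c, R a b -> R b c -> R a c) ->
  (forall a b, R a b -> R b a -> a = b) -> kolmogorov_space aT.
Proof.
move=> rr rt ra x y /eqP nxy.
have oR : forall a : aT, open (R a : set aT).
  by move=> a; apply: (proj2 (alexT_open _)) => p q rpq rap; exact: rt rap rpq.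
have [rxy|nrxy] := pselect (R x y).
  exists (R y : set aT); right; split; rewrite inE.
    by rewrite nbhsE; exists (R y : set aT) => //; split => //; exact: oR.
  by move=> ryx; apply: nxy; exact: ra.
exists (R x : set aT); left; split; rewrite inE //.
by rewrite nbhsE; exists (R x : set aT) => //; split => //; exact: oR.
Qed.
End AlexT.
Arguments alexT {T} r.
Arguments alexT_open {T R}.
Arguments alexT_alex {T R}.
Arguments alexT_Rspec {T R x y}.
Arguments alexT_specR {T R x y}.
Arguments alexT_kolmo {T R}.
Lemma sig_eq (T : Type) (P : T -> Prop) (a b : {x | P x}) :
  proj1_sig a = proj1_sig b -> a = b.
Proof.
case: a b => x px [y py] /= e; subst y; congr exist; exact: Prop_irrelevance.
Qed.

Section FinGenFinite.
Variables (C : topologicalType -> Prop) (needT0 : Prop).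
Hypothesis hA : forall W, C W -> alexandroff W.
Hypothesis hB : forall (T : Type) (R : T -> T -> Prop), (forall a, R a a) ->
  (forall a b c, R a b -> R b c -> R a c) ->
  (needT0 -> forall a b, R a b -> R b a -> a = b) -> C (alexT R).
Hypothesis hT : forall W, needT0 -> C W -> forall x y : W, spec x y -> spec y x -> x = y.

Variable X : topologicalType.
Hypothesis CX : C X.

Let I := {A : set X | finite_set A}.
Let le (A B : I) := proj1_sig A `<=` proj1_sig B.
Let RZ (A : I) (a b : {x | proj1_sig A x}) := spec (proj1_sig a) (proj1_sig b).
Let Z (A : I) : topologicalType := alexT (RZ A).
Let z (A B : I) (p : le A B) : Z A -> Z B :=
  fun a => exist _ (proj1_sig a) (p _ (proj2_sig a)).
Let c (A : I) : Z A -> X := fun a => proj1_sig a.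

Let RZ_refl A a : RZ A a a. Proof. exact: spec_refl. Qed.
Let RZ_trans A a b d : RZ A a b -> RZ A b d -> RZ A a d.
Proof. exact: spec_trans. Qed.

Let Z_spec A (a b : Z A) : spec a b <-> spec (proj1_sig a) (proj1_sig b).
Proof.
split; first by move=> h; exact: (alexT_specR (RZ_refl A) (@RZ_trans A) h).
move=> h; exact: (@alexT_Rspec _ (RZ A) a b h).
Qed.

Lemma fg_finite : fin_gen C X -> finite_set [set: X].
Proof.
move=> hfg.
have dir : directed_poset le.
  split.
  - by move=> i.
  - by move=> i j h1 h2; apply: sig_eq; apply/seteqP.
  - by move=> i j k h1 h2; apply: subset_trans h1 h2.
  - move=> F fF.
    have fU : finite_set (\bigcup_(A in F) proj1_sig A).
      by apply: bigcup_finite => // A _; exact: proj2_sig A.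
    exists (exist _ _ fU) => A FA x Ax /=; by exists A.
have diag : diagram_in C le Z z.
  split.
  - move=> A; apply: hB; [exact: RZ_refl|exact: RZ_trans|].
    move=> t a b h1 h2; apply: sig_eq; exact: hT.
  - move=> A B p; apply: alex_cont; first exact: alexT_alex.
    by move=> a b /Z_spec h; apply/Z_spec.
  - by move=> A p; apply: funext => a; apply: sig_eq.
  - by move=> A B D p q r; apply: funext => a; apply: sig_eq.
have mono : forall A B (p : le A B), mono_in C (@z A B p).
  move=> A B p W _ g h _ _ e; apply: funext => w.
  apply: sig_eq; exact: (congr1 (fun F => proj1_sig (F w)) e).
have colim : colimit_in C le Z z X c.
  split => //.
  - move=> A; apply: alex_cont; first exact: alexT_alex.
    by move=> a b /Z_spec.
  - move=> W CW d hd hcomp.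
    pose single (x : X) : I := exist _ [set x] (finite_set1 x).
    pose pt (x : X) : Z (single x) := exist _ x (erefl : [set x] x).
    have key : forall (x : X) (A : I) (a : Z A), proj1_sig a = x ->
        d A a = d (single x) (pt x).
      move=> x A a ax.
      have p : le (single x) A by move=> y /= ->; rewrite -ax; exact: proj2_sig a.
      rewrite -(hcomp _ _ p) /=; congr (d A); apply: sig_eq => /=; by [].
    exists (fun x => d (single x) (pt x)); split.
      split.
        apply: alex_cont; first exact: hA.
        move=> x y sxy.
        have fP : finite_set [set x; y] by exact: finite_set2.
        pose P : I := exist _ _ fP.
        pose a : Z P := exist _ x (or_introl erefl).
        pose b : Z P := exist _ y (or_intror erefl).
        rewrite -(key x P a) // -(key y P b) //.
        apply: cont_spec; first exact: hd.
        by apply/Z_spec.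
      by move=> A; apply: funext => a /=; rewrite (key (proj1_sig a) A a).
    move=> u' [_ hu']; apply: funext => x.
    by rewrite -(hu' (single x)).
have [[i [g [_ e]]] _] := hfg I le Z z dir diag mono X c colim idfun
  (proj2 (continuousP _) (fun A oA => oA)).
apply: (sub_finite_set _ (proj2_sig i)) => x _.
have -> : x = @c i (g x) by exact: (congr1 (fun F => F x) e).
exact: proj2_sig.
Qed.
End FinGenFinite.

Section FiniteFinGen.
Variables (C : topologicalType -> Prop) (needT0 : Prop).
Hypothesis hA : forall W, C W -> alexandroff W.
Hypothesis hB : forall (T : Type) (R : T -> T -> Prop), (forall a, R a a) ->
  (forall a b c, R a b -> R b c -> R a c) ->
  (needT0 -> forall a b, R a b -> R b a -> a = b) -> C (alexT R).
Hypothesis hT : forall W, needT0 -> C W -> forall x y : W, spec x y -> spec y x -> x = y.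

Variables (I : Type) (le : I -> I -> Prop) (Z : I -> topologicalType)
  (z : forall i j, le i j -> Z i -> Z j).
Arguments z {i j}.
Hypothesis dir : directed_poset le.
Hypothesis diag : diagram_in C le Z (@z).

Let le_refl i : le i i. Proof. by case: dir. Qed.
Let le_trans {i j k} : le i j -> le j k -> le i k. Proof. by case: dir => _ _ h _; exact: h. Qed.
Let up2 i j : exists k, le i k /\ le j k.
Proof.
case: dir => _ _ _ /(_ [set i; j] (finite_set2 i j)) [k hk].
by exists k; split; apply: hk; [left|right].
Qed.
Let zP i j (p q : le i j) : z p = z q.
Proof. by rewrite (Prop_irrelevance p q). Qed.
Let zcomp {i j k} (p : le i j) (q : le j k) (r : le i k) a : z q (z p a) = z r a.
Proof. case: diag => _ _ _ h; exact: (congr1 (fun F => F a) (h _ _ _ p q r)). Qed.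
Let zid {i} (p : le i i) a : z p a = a.
Proof. case: diag => _ _ h _; by rewrite h. Qed.
Let zcont i j (p : le i j) : continuous (z p).
Proof. by case: diag => _ h _ _; exact: h. Qed.
Let CZ i : C (Z i). Proof. by case: diag. Qed.

Let S := {i : I & Z i}.
Definition eqv (x y : S) := exists j (p : le (projT1 x) j) (q : le (projT1 y) j),
  z p (projT2 x) = z q (projT2 y).
Definition sle (x y : S) := exists j (p : le (projT1 x) j) (q : le (projT1 y) j),
  spec (z p (projT2 x)) (z q (projT2 y)).

Let eqv_up {x y : S} {j : I} {p : le (projT1 x) j} {q : le (projT1 y) j} {k : I} (r : le j k) :
  z p (projT2 x) = z q (projT2 y) ->
  z (le_trans p r) (projT2 x) = z (le_trans q r) (projT2 y).
Proof. by move=> e; rewrite -(zcomp p r) -(zcomp q r) e. Qed.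
Let sle_up {x y : S} {j : I} {p : le (projT1 x) j} {q : le (projT1 y) j} {k : I} (r : le j k) :
  spec (z p (projT2 x)) (z q (projT2 y)) ->
  spec (z (le_trans p r) (projT2 x)) (z (le_trans q r) (projT2 y)).
Proof. by move=> e; rewrite -(zcomp p r) -(zcomp q r); apply: cont_spec. Qed.

Lemma eqv_refl x : eqv x x.
Proof. by exists (projT1 x), (le_refl _), (le_refl _). Qed.
Lemma eqv_sym {x y} : eqv x y -> eqv y x.
Proof. by case=> j [p [q e]]; exists j, q, p. Qed.
Lemma eqv_trans {x y w} : eqv x y -> eqv y w -> eqv x w.
Proof.
case=> j [p [q e]] [k [p' [q' e']]].
have [m [jm km]] := up2 j k.
exists m, (le_trans p jm), (le_trans q' km).
rewrite (eqv_up jm e) -(eqv_up km e').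
by rewrite (Prop_irrelevance (le_trans q jm) (le_trans p' km)).
Qed.
Lemma sle_refl x : sle x x.
Proof. by exists (projT1 x), (le_refl _), (le_refl _); exact: spec_refl. Qed.
Lemma sle_trans {x y w} : sle x y -> sle y w -> sle x w.
Proof.
case=> j [p [q e]] [k [p' [q' e']]].
have [m [jm km]] := up2 j k.
exists m, (le_trans p jm), (le_trans q' km).
apply: spec_trans (sle_up jm e) _.
have := sle_up km e'.
by rewrite (Prop_irrelevance (le_trans q jm) (le_trans p' km)).
Qed.
Lemma eqv_sle {x y} : eqv x y -> sle x y.
Proof. by case=> j [p [q e]]; exists j, p, q; rewrite e; exact: spec_refl. Qed.
Lemma sle_antisym {x y} : needT0 -> sle x y -> sle y x -> eqv x y.
Proof.
move=> t [j [p [q e]]] [k [p' [q' e']]].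
have [m [jm km]] := up2 j k.
exists m, (le_trans p jm), (le_trans q jm).
apply: (hT _ t (CZ m) _ _ (sle_up jm e)).
have := sle_up km e'.
by rewrite (Prop_irrelevance (le_trans q jm) (le_trans p' km))
  (Prop_irrelevance (le_trans p jm) (le_trans q' km)).
Qed.

Definition cls (x : S) : set S := eqv x.
Lemma cls_eqv {x y} : cls x = cls y -> eqv x y.
Proof. move=> e; have h : cls y y by exact: eqv_refl. by move: h; rewrite -e. Qed.
Lemma eqv_cls {x y} : eqv x y -> cls x = cls y.
Proof.
move=> e; apply/seteqP; split => w; rewrite /cls => h.
  exact: eqv_trans (eqv_sym e) h.
exact: eqv_trans e h.
Qed.

Definition Q := {A : set S | exists x, A = cls x}.
Definition RQ (A B : Q) := exists x y,
  [/\ proj1_sig A = cls x, proj1_sig B = cls y & sle x y].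
Lemma RQ_refl A : RQ A A.
Proof.
case: A => A [x e]; exists x, x; split => //; exact: sle_refl.
Qed.
Lemma RQ_trans A B D : RQ A B -> RQ B D -> RQ A D.
Proof.
move=> [x [y [ex ey s1]]] [y' [w [ey' ew s2]]].
exists x, w; split => //; apply: sle_trans s1 (sle_trans _ s2).
apply: eqv_sle; apply: cls_eqv; by rewrite -ey -ey'.
Qed.
Lemma RQ_antisym : needT0 -> forall A B, RQ A B -> RQ B A -> A = B.
Proof.
move=> t A B [x [y [ex ey s1]]] [y' [x' [ey' ex' s2]]].
apply: sig_eq; rewrite ex ey; apply: eqv_cls; apply: sle_antisym => //.
apply: sle_trans (sle_trans _ s2) _; apply: eqv_sle; apply: cls_eqv.
  by rewrite -ey -ey'.
by rewrite -ex' -ex.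
Qed.

Definition Lc : topologicalType := alexT RQ.
Lemma CLc : C Lc.
Proof. apply: hB; [exact: RQ_refl|exact: RQ_trans|exact: RQ_antisym]. Qed.

Definition cc {i : I} (a : Z i) : Lc :=
  exist _ (cls (existT _ i a)) (ex_intro _ _ erefl).

Lemma cc_cont i : continuous (@cc i).
Proof.
apply: alex_cont; first exact: hA.
move=> a b sab; apply: (@alexT_Rspec _ RQ (cc a) (cc b)).
exists (existT _ i a), (existT _ i b); split => //.
by exists i, (le_refl i), (le_refl i); rewrite !zid.
Qed.

Lemma cc_comp i j (p : le i j) : @cc j \o z p = @cc i.
Proof.
apply: funext => a; apply: sig_eq => /=; apply: eqv_cls.
exists j, (le_refl j), p => /=; by rewrite zid.
Qed.

Lemma RQ_spec (A B : Lc) : spec A B -> RQ A B.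
Proof. move=> h; exact: (alexT_specR RQ_refl RQ_trans h). Qed.


Lemma comp_cont (A B D : topologicalType) (g : B -> D) (h : A -> B) :
  continuous g -> continuous h -> continuous (g \o h).
Proof.
move=> /continuousP gc /continuousP hc; apply/continuousP => U oU.
exact: hc _ (gc _ oU).
Qed.

Variables (L : topologicalType) (c : forall i, Z i -> L).
Hypothesis colim : colimit_in C le Z (@z) L c.

Definition cS (x : S) : L := c (projT1 x) (projT2 x).

Let c_comp {i j} (p : le i j) a : c j (z p a) = c i a.
Proof. by case: colim => _ _ h _; exact: (congr1 (fun F => F a) (h i j p)). Qed.
Let c_cont i : continuous (c i). Proof. by case: colim. Qed.

Lemma c_eqv {x y} : eqv x y -> cS x = cS y.
Proof. by case=> j [p [q e]]; rewrite /cS -(c_comp p) -(c_comp q) e. Qed.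

Lemma c_spec {x y} : sle x y -> spec (cS x) (cS y).
Proof.
case=> j [p [q e]]; rewrite /cS -(c_comp p) -(c_comp q).
exact: cont_spec (c_cont j) e.
Qed.

Definition rep (A : Q) : S := proj1_sig (cid (proj2_sig A)).
Lemma repP (A : Q) : proj1_sig A = cls (rep A).
Proof. exact: (proj2_sig (cid (proj2_sig A))). Qed.

Definition v (A : Lc) : L := cS (rep A).

Lemma v_cont : continuous v.
Proof.
apply: alex_cont; first exact: alexT_alex.
move=> A B /RQ_spec [x [y [ex ey sxy]]].
rewrite /v (c_eqv (cls_eqv (etrans (esym (repP A)) ex))).
rewrite (c_eqv (cls_eqv (etrans (esym (repP B)) ey))).
exact: c_spec.
Qed.

Lemma colim_facts :
  [/\ (forall l : L, exists x : S, l = cS x),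
      (forall x y, cS x = cS y -> eqv x y) &
      (forall x y, spec (cS x) (cS y) -> sle x y)].
Proof.
have [CL _ _ hU] := colim.
have [u [[uc uh] _]] := hU Lc CLc (@cc) cc_cont cc_comp.
have ucS : forall x : S, u (cS x) = cc (projT2 x).
  by case=> i a; rewrite /cS /= -(uh i).
split.
- have vu : v \o u = idfun.
    have [w [_ wu]] := hU L CL c c_cont (fun i j p => funext (c_comp p)).
    rewrite -(wu idfun); last first.
      split; last by [].
      by apply/continuousP => U oU.
    apply/esym; apply: wu; split; first exact: comp_cont v_cont uc.
    move=> i; apply: funext => a /=.
    rewrite -/((u \o c i) a) (congr1 (fun F => F a) (uh i)) /v.
    have -> : c i a = cS (existT _ i a) by [].
    apply: c_eqv; apply: cls_eqv; rewrite -repP; by [].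
  move=> l; exists (rep (u l)).
  by have := congr1 (fun F => F l) vu.
- move=> x y e.
  have := congr1 u e; rewrite !ucS => /(congr1 (@proj1_sig _ _)) /=.
  case: x {e} => i a; case: y => k b /= e'.
  by apply: cls_eqv.
- move=> x y /(cont_spec uc); rewrite !ucS => /RQ_spec [x' [y' [ex ey s]]].
  case: x ex => i a /= ex; case: y ey => k b /= ey.
  apply: sle_trans (eqv_sle (cls_eqv ex)) (sle_trans s _).
  exact: eqv_sle (eqv_sym (cls_eqv ey)).
Qed.

End FiniteFinGen.

Lemma finite_fg (C : topologicalType -> Prop) (needT0 : Prop)
  (hA : forall W, C W -> alexandroff W)
  (hB : forall (T : Type) (R : T -> T -> Prop), (forall a, R a a) ->
    (forall a b c, R a b -> R b c -> R a c) ->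
    (needT0 -> forall a b, R a b -> R b a -> a = b) -> C (alexT R))
  (hT : forall W, needT0 -> C W -> forall x y : W, spec x y -> spec y x -> x = y)
  (X : topologicalType) :
  alexandroff X -> finite_set [set: X] -> fin_gen C X.
Proof.
move=> hX fin I le Z z dir diag _ L c colim f fc.
have [F1 F2 F3] := @colim_facts C needT0 hA hB hT I le Z z dir diag L c colim.
have [le_refl _ le_trans hub] := dir.
have [_ zcont zid zcomp] := diag.
have zc : forall i j k (p : le i j) (q : le j k) (r : le i k) a,
    z j k q (z i j p a) = z i k r a.
  by move=> i j k p q r a; exact: (congr1 (fun F => F a) (zcomp i j k p q r)).
have [_ _ ccomp _] := colim.
have cc : forall i j (p : le i j) a, c j (z i j p a) = c i a.
  by move=> i j p a; exact: (congr1 (fun F => F a) (ccomp i j p)).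
split.
- pose r (x : X) := proj1_sig (cid (F1 (f x))).
  have hr : forall x, f x = cS I Z L c (r x) := fun x => proj2_sig (cid (F1 (f x))).
  have hJ : forall xy : X * X, exists j, exists p : le (projT1 (r xy.1)) j,
      exists q : le (projT1 (r xy.2)) j, spec xy.1 xy.2 ->
      spec (z _ _ p (projT2 (r xy.1))) (z _ _ q (projT2 (r xy.2))).
    case=> x y /=; have [sxy|nsxy] := pselect (spec x y).
      have := cont_spec fc sxy; rewrite !hr => /F3 [j [p [q e]]].
      by exists j, p, q.
    have [k hk] := hub [set projT1 (r x); projT1 (r y)] (finite_set2 _ _).
    by exists k, (hk _ (or_introl erefl)), (hk _ (or_intror erefl)).
  pose J xy := proj1_sig (cid (hJ xy)).
  have fJ : finite_set (range J).
    apply: (sub_finite_set _ (finite_image J (finite_setX fin fin))).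
    by move=> j [xy _ <-]; exists xy.
  have [m hm] := hub _ fJ.
  have lJ : forall xy, le (J xy) m by move=> xy; apply: hm; exists xy.
  have pm : forall x, le (projT1 (r x)) m.
    move=> x; have [p _] := proj2_sig (cid (hJ (x, x))).
    exact: le_trans p (lJ (x, x)).
  exists m, (fun x => z _ _ (pm x) (projT2 (r x))); split.
    apply: alex_cont => // x y sxy.
    have [p [q hs]] := proj2_sig (cid (hJ (x, y))).
    have := cont_spec (zcont _ _ (lJ (x, y))) (hs sxy).
    by rewrite !zc.
  apply: funext => x /=; rewrite hr cc; by [].
- move=> i g g' gc g'c e1 e2.
  have hx : forall x, eqv I le Z z (existT _ i (g x)) (existT _ i (g' x)).
    move=> x; apply: F2; rewrite /cS /=.
    by rewrite -[c i (g x)]/((c i \o g) x) -[c i (g' x)]/((c i \o g') x) -e1 -e2.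
  pose J x := proj1_sig (cid (hx x)).
  have fJ : finite_set (range J `|` [set i]).
    rewrite finite_setU; split; last exact: finite_set1.
    apply: (sub_finite_set _ (finite_image J fin)).
    by move=> j [xy _ <-]; exists xy.
  have [m hm] := hub _ fJ.
  have lim : le i m by apply: hm; right.
  have lJ : forall x, le (J x) m by move=> x; apply: hm; left; exists x.
  exists m, lim; apply: funext => x /=.
  have [p [q e]] := proj2_sig (cid (hx x)).
  rewrite -(zc _ _ _ p (lJ x) lim) -(zc _ _ _ q (lJ x) lim).
  by congr (z _ _ _); exact: e.
Qed.

Theorem proposition8p5 :
  (forall X : topologicalType, Alex X ->
     (fin_gen Alex X <-> finite_set [set: X])) /\
  (forall X : topologicalType, Alex0 X ->
     (fin_gen Alex0 X <-> finite_set [set: X])).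
Proof.
have hA1 : forall W, Alex W -> alexandroff W by [].
have hB1 : forall (T : Type) (R : T -> T -> Prop), (forall a, R a a) ->
    (forall a b c, R a b -> R b c -> R a c) ->
    (False -> forall a b, R a b -> R b a -> a = b) -> Alex (alexT R).
  by move=> T R _ _ _; exact: alexT_alex.
have hT1 : forall W, False -> Alex W -> forall x y : W, spec x y -> spec y x -> x = y.
  by [].
have hA2 : forall W, Alex0 W -> alexandroff W by move=> W [].
have hB2 : forall (T : Type) (R : T -> T -> Prop), (forall a, R a a) ->
    (forall a b c, R a b -> R b c -> R a c) ->
    (True -> forall a b, R a b -> R b a -> a = b) -> Alex0 (alexT R).
  move=> T R rr rt ra; split; first exact: alexT_alex.
  exact: alexT_kolmo rr rt (ra I).
have hT2 : forall W, True -> Alex0 W -> forall x y : W, spec x y -> spec y x -> x = y.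
  by move=> W _ [_ hk] x y; exact: kolmo_spec.
split => X hX; split.
- exact: fg_finite hA1 hB1 hT1 X hX.
- exact: finite_fg hA1 hB1 hT1 X hX.
- exact: fg_finite hA2 hB2 hT2 X hX.
- exact: finite_fg hA2 hB2 hT2 X (proj1 hX).
Qed.
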